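(* Let $\ell:\mathbb{R}\to\mathbb{R}$ be non-decreasing, convex, non-negative and continuously differentiable on $\mathbb{R}$, with $\ell'(z)>0$ for all $z\ge-\ell(0)/2$. Let $d=\sup\{z\in\mathbb{R}:\ell'(z)=0\}$, and $d=-\infty$ if $\ell'(z)>0$ for all $z$. Assume: (1) $d<-\ell(0)/2$; (2) $\ell$ is twice continuously differentiable on $(d,\infty)$; (3) $\ell''(z)>0$ on $(d,\infty)$; (4) $1/\ell'(z)$ is convex on $(d,\infty)$. Define $\psi(\theta,\rho)=\ell(\rho)-\inf_{z\in\mathbb{R}}\{\frac{1+\theta}{2}\ell(\rho-z)+\frac{1-\theta}{2}\ell(\rho+z)\}$ for $0\le\theta\le1$, $\rho\in\mathbb{R}$. Then for every $\theta\in[0,1]$, $\rho\mapsto\psi(\theta,\rho)$ is non-decreasing on $[-\ell(0)/2,\infty)$. *)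

(* Defs.v *)
From Stdlib Require Import Reals.
From Coquelicot Require Import Coquelicot.
Open Scope R_scope.

Definition dpt (l : R -> R) : Rbar := Lub_Rbar (fun z => Derive l z = 0).

Definition psi (l : R -> R) (theta rho : R) : Rbar :=
  Rbar_minus (Finite (l rho))
    (Glb_Rbar (fun v => exists z : R,
        v = (1 + theta) / 2 * l (rho - z) + (1 - theta) / 2 * l (rho + z))).

(* Main.v *)
Require Import Defs.
From Stdlib Require Import Reals Lra Psatz ZArith.
From Coquelicot Require Import Coquelicot.
Open Scope R_scope.

Lemma exists_nat_gt (r : R) : exists n : nat, r < INR n.
Proof.
  destruct (archimed r) as [H1 _].
  destruct (Z_le_gt_dec 0 (up r)) as [Hp|Hn].
  - exists (Z.to_nat (up r)). rewrite INR_IZR_INZ, Z2Nat.id by lia. lra.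
  - exists 0%nat. simpl. assert (Hn2 : (up r < 0)%Z) by lia. apply IZR_lt in Hn2. lra.
Qed.

Lemma tangent (l : R -> R)
  (Hconv : forall (x y t : R), 0 <= t <= 1 ->
      l (t * x + (1 - t) * y) <= t * l x + (1 - t) * l y)
  (Hd : forall x, ex_derive l x) :
  forall w x, l w + Derive l w * (x - w) <= l x.
Proof.
  intros w x.
  destruct (Req_dec x w) as [E|Nxw]. { subst. lra. }
  set (D := Derive l w).
  assert (HD : derivable_pt_lim l w D).
  { apply is_derive_Reals. apply Derive_correct. apply Hd. }
  destruct (Rle_or_lt (l w + D * (x - w)) (l x)) as [ok|bad]; [exact ok|exfalso].
  assert (Ha : 0 < Rabs (x - w)) by (apply Rabs_pos_lt; lra).
  set (eps := (l w + D * (x - w) - l x) / Rabs (x - w)).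
  assert (Heps : 0 < eps) by (unfold eps; apply Rdiv_lt_0_compat; lra).
  destruct (HD eps Heps) as [del Hdel].
  set (t := Rmin (1/2) (del / (2 * Rabs (x - w)))).
  assert (Ht0 : 0 < t).
  { unfold t. apply Rmin_glb_lt; [lra|]. apply Rdiv_lt_0_compat; [apply (cond_pos del)|lra]. }
  assert (Ht1 : t <= 1/2) by apply Rmin_l.
  assert (Ht2 : t <= del / (2 * Rabs (x - w))) by apply Rmin_r.
  set (h := t * (x - w)).
  assert (Hh0 : h <> 0) by (unfold h; apply Rmult_integral_contrapositive; split; lra).
  assert (Hhd : Rabs h < del).
  { unfold h. rewrite Rabs_mult, (Rabs_pos_eq t) by lra.
    assert (t * Rabs (x - w) <= del / 2).
    { apply Rmult_le_compat_r with (r := Rabs (x-w)) in Ht2; [|lra].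
      replace (del / (2 * Rabs (x - w)) * Rabs (x - w)) with (del/2) in Ht2 by (field; lra).
      exact Ht2. }
    pose proof (cond_pos del). lra. }
  specialize (Hdel h Hh0 Hhd).
  set (Q := (l (w + h) - l w) / h) in Hdel.
  assert (HQ : l (w + h) - l w = Q * h) by (unfold Q; field; exact Hh0).
  assert (Hc : l (t * x + (1 - t) * w) <= t * l x + (1 - t) * l w) by (apply Hconv; lra).
  replace (t * x + (1 - t) * w) with (w + h) in Hc by (unfold h; ring).
  assert (H1 : Q * t * (x - w) <= t * (l x - l w)) by (replace (Q * t * (x - w)) with (Q * h) by (unfold h; ring); lra).
  assert (H2 : Q * (x - w) <= l x - l w).
  { apply Rmult_le_reg_l with t; [lra|]. replace (t * (Q*(x-w))) with (Q*t*(x-w)) by ring. exact H1. }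
  assert (H3 : eps * Rabs (x - w) = l w + D * (x - w) - l x) by (unfold eps; field; lra).
  assert (H4 : (D - Q) * (x - w) <= Rabs (D - Q) * Rabs (x - w)).
  { rewrite <- Rabs_mult. apply Rle_abs. }
  assert (H5 : Rabs (D - Q) < eps) by (rewrite Rabs_minus_sym; exact Hdel).
  nra.
Qed.

Lemma deriv_mono (l : R -> R)
  (Hconv : forall (x y t : R), 0 <= t <= 1 ->
      l (t * x + (1 - t) * y) <= t * l x + (1 - t) * l y)
  (Hd : forall x, ex_derive l x) :
  forall x y, x <= y -> Derive l x <= Derive l y.
Proof.
  intros x y Hxy.
  destruct (Req_dec x y) as [E|N]. { subst; lra. }
  pose proof (tangent l Hconv Hd x y). pose proof (tangent l Hconv Hd y x).
  assert (0 <= (Derive l y - Derive l x) * (y - x)) by nra.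
  apply Rmult_le_reg_r with (y - x); [lra|]. nra.
Qed.

Lemma pair_exists (l : R -> R)
  (Hconv : forall (x y t : R), 0 <= t <= 1 ->
      l (t * x + (1 - t) * y) <= t * l x + (1 - t) * l y)
  (Hnonneg : forall x : R, 0 <= l x)
  (HC1 : forall x : R, ex_derive l x /\ continuous (Derive l) x)
  (Hpos : forall z : R, - l 0 / 2 <= z -> 0 < Derive l z)
  (a b : R) (Hab : b <= a) (Hb : 0 < b) (y : R) (Hy : - l 0 / 2 <= y) :
  exists z, 0 <= z /\ a * Derive l (y - z) = b * Derive l (y + z).
Proof.
  assert (Hd : forall x, ex_derive l x) by (intro; apply HC1).
  assert (Hc : forall x, continuity_pt (Derive l) x).
  { intro x. apply continuity_pt_filterlim. apply HC1. }
  set (h := fun z => b * Derive l (y + z) - a * Derive l (y - z)).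
  assert (Hh : continuity h).
  { intro z. unfold h.
    assert (Cc : forall c, continuity_pt (fun _ : R => c) z)
      by (intro c; apply continuity_pt_const; intros u v; reflexivity).
    apply (continuity_pt_minus (fun z => b * Derive l (y+z)) (fun z => a * Derive l (y - z))).
    - apply (continuity_pt_mult (fun _ => b) (fun z => Derive l (y+z))); [apply Cc|].
      apply (continuity_pt_comp (fun z => y + z) (Derive l)); [|apply Hc].
      apply (continuity_pt_plus (fun _ => y) (fun z => z)); [apply Cc|apply continuity_pt_id].
    - apply (continuity_pt_mult (fun _ => a) (fun z => Derive l (y-z))); [apply Cc|].
      apply (continuity_pt_comp (fun z => y - z) (Derive l)); [|apply Hc].
      apply (continuity_pt_minus (fun _ => y) (fun z => z)); [apply Cc|apply continuity_pt_id]. }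
  pose proof (Hpos y Hy) as Hly.
  assert (Hl0 : 0 <= l 0) by apply Hnonneg.
  set (Z := Rabs y + a * l 0 / (b * Derive l y) + 1).
  assert (HZ1 : a * l 0 / (b * Derive l y) >= 0).
  { apply Rle_ge. apply Rdiv_le_0_compat; nra. }
  assert (HZ : 0 < Z) by (unfold Z; pose proof (Rabs_pos y); lra).
  assert (HyZ : y - Z < 0) by (unfold Z; pose proof (Rle_abs y); lra).
  assert (HhZ : 0 < h Z).
  { unfold h.
    pose proof (tangent l Hconv Hd (y - Z) 0) as T.
    pose proof (Hnonneg (y - Z)).
    assert (M : Derive l y <= Derive l (y + Z)) by (apply deriv_mono; auto; lra).
    assert (K : a * l 0 < b * Derive l y * (Z - y)).
    { assert (Z - y > a * l 0 / (b * Derive l y)) by (unfold Z; pose proof (Rle_abs y); lra).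
      apply Rmult_gt_compat_l with (r := b * Derive l y) in H0; [|nra].
      replace (b * Derive l y * (a * l 0 / (b * Derive l y))) with (a * l 0) in H0 by (field; lra).
      lra. }
    assert (Derive l (y - Z) * (Z - y) <= l 0) by lra.
    assert (a * Derive l (y - Z) < b * Derive l y).
    { apply Rmult_lt_reg_r with (Z - y); [lra|]. nra. }
    nra. }
  assert (Hh0 : h 0 <= 0).
  { unfold h. replace (y + 0) with y by ring. replace (y - 0) with y by ring. nra. }
  destruct (Req_dec (h 0) 0) as [E|N].
  - exists 0. split; [lra|]. unfold h in E. lra.
  - destruct (IVT h 0 Z Hh HZ ltac:(lra) HhZ) as [z [Hz1 Hz2]].
    exists z. split; [lra|]. unfold h in Hz2. lra.
Qed.

Definition Sset (l : R -> R) (theta rho : R) : R -> Prop :=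
  fun v => exists z : R,
    v = (1 + theta) / 2 * l (rho - z) + (1 - theta) / 2 * l (rho + z).

Lemma local_ineq (l : R -> R)
  (Hmono : forall x y : R, x <= y -> l x <= l y)
  (Hconv : forall (x y t : R), 0 <= t <= 1 ->
      l (t * x + (1 - t) * y) <= t * l x + (1 - t) * l y)
  (Hnonneg : forall x : R, 0 <= l x)
  (HC1 : forall x : R, ex_derive l x /\ continuous (Derive l) x)
  (Hpos : forall z : R, - l 0 / 2 <= z -> 0 < Derive l z)
  (Hd : Rbar_lt (dpt l) (Finite (- l 0 / 2)))
  (Hinvconv : forall (x y t : R), Rbar_lt (dpt l) (Finite x) -> Rbar_lt (dpt l) (Finite y) ->
      0 <= t <= 1 ->
      / Derive l (t * x + (1 - t) * y) <= t * / Derive l x + (1 - t) * / Derive l y)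
  (theta : R) (Hth : 0 <= theta < 1) (x y : R) (Hxy : x <= y) (Hy : - l 0 / 2 <= y) :
  exists v', Sset l theta y v' /\
    forall v, Sset l theta x v -> v' - Derive l y * (y - x) <= v.
Proof.
  assert (Hdd : forall x, ex_derive l x) by (intro; apply HC1).
  set (a := (1 + theta) / 2). set (b := (1 - theta) / 2).
  assert (Hab : b <= a) by (unfold a, b; lra).
  assert (Hb : 0 < b) by (unfold b; lra).
  destruct (pair_exists l Hconv Hnonneg HC1 Hpos a b Hab Hb y Hy) as [z0 [Hz0 Heq]].
  set (u := y - z0) in *. set (w := y + z0) in *.
  set (c := a * Derive l u).
  assert (Hw : 0 < Derive l w) by (apply Hpos; unfold w; lra).
  assert (Hc : 0 < c) by (unfold c; rewrite Heq; nra).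
  assert (Hu : 0 < Derive l u).
  { unfold c in Hc. destruct (Rle_or_lt (Derive l u) 0); [|assumption]. nra. }
  assert (Hdu : Rbar_lt (dpt l) (Finite u)).
  { assert (Cu : continuity_pt (Derive l) u) by (apply continuity_pt_filterlim; apply HC1).
    destruct (Cu (Derive l u) Hu) as [alp [Halp Hal]].
    set (w0 := u - alp / 2).
    assert (Hw0 : 0 < Derive l w0).
    { assert (HH := Hal w0). simpl in HH. unfold R_dist, D_x, no_cond in HH.
      assert (Rabs (Derive l w0 - Derive l u) < Derive l u).
      { apply HH. split; [split; [exact I| unfold w0; lra]|].
        unfold w0. replace (u - alp / 2 - u) with (- (alp/2)) by ring.
        rewrite Rabs_Ropp, Rabs_pos_eq; lra. }
      pose proof (Rabs_def2 _ _ H). lra. }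
    apply Rbar_le_lt_trans with (Finite w0); [|simpl; unfold w0; lra].
    unfold dpt. apply (proj2 (Lub_Rbar_correct _)).
    intros t Ht. simpl. destruct (Rle_or_lt t w0) as [ok|bad]; [exact ok|exfalso].
    pose proof (deriv_mono l Hconv Hdd w0 t (Rlt_le _ _ bad)). lra. }
  assert (Hdw : Rbar_lt (dpt l) (Finite w)).
  { apply Rbar_lt_le_trans with (Finite (- l 0 / 2)); [exact Hd|simpl; unfold w; lra]. }
  assert (Hcl : 2 * c <= Derive l y).
  { pose proof (Hinvconv u w (1/2) Hdu Hdw ltac:(lra)) as HI.
    replace (1 / 2 * u + (1 - 1 / 2) * w) with y in HI by (unfold u, w; field).
    assert (Hy' := Hpos y Hy).
    assert (E1 : / Derive l u = a / c) by (unfold c; field; split; lra).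
    assert (E2 : / Derive l w = b / c) by (unfold c; rewrite Heq; field; split; lra).
    rewrite E1, E2 in HI.
    replace (1 / 2 * (a / c) + (1 - 1 / 2) * (b / c)) with (/ (2 * c)) in HI
      by (unfold a, b; field; lra).
    apply Rinv_le_contravar in HI; [|apply Rinv_0_lt_compat; lra].
    rewrite !Rinv_inv in HI. exact HI. }
  exists (a * l u + b * l w). split.
  { exists z0. reflexivity. }
  intros v [z Hv]. subst v. fold a b.
  pose proof (tangent l Hconv Hdd u (x - z)) as T1.
  pose proof (tangent l Hconv Hdd w (x + z)) as T2.
  assert (Ha0 : 0 <= a) by lra.
  assert (A1 : a * (l u + Derive l u * (x - z - u)) <= a * l (x - z)) by (apply Rmult_le_compat_l; lra).
  assert (A2 : b * (l w + Derive l w * (x + z - w)) <= b * l (x + z)) by (apply Rmult_le_compat_l; lra).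
  assert (E : a * Derive l u * (x - z - u) + b * Derive l w * (x + z - w) = c * (2 * x - 2 * y)).
  { unfold c. rewrite Heq. unfold u, w. ring. }
  assert (c * (2 * x - 2 * y) >= - (Derive l y * (y - x))) by nra.
  nra.
Qed.

Lemma glb_S (l : R -> R) (Hnonneg : forall x : R, 0 <= l x) theta (Hth : 0 <= theta <= 1) rho :
  exists g, Glb_Rbar (Sset l theta rho) = Finite g /\
    (forall v, Sset l theta rho v -> g <= v) /\
    (forall m, (forall v, Sset l theta rho v -> m <= v) -> m <= g).
Proof.
  destruct (Glb_Rbar_correct (Sset l theta rho)) as [lb glb].
  assert (S0 : Sset l theta rho ((1 + theta) / 2 * l (rho - 0) + (1 - theta) / 2 * l (rho + 0)))
    by (exists 0; reflexivity).
  assert (P : forall v, Sset l theta rho v -> 0 <= v).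
  { intros v [z ->]. pose proof (Hnonneg (rho - z)). pose proof (Hnonneg (rho + z)).
    apply Rplus_le_le_0_compat; apply Rmult_le_pos; lra. }
  assert (L0 : Rbar_le (Finite 0) (Glb_Rbar (Sset l theta rho))).
  { apply glb. intros v Hv. simpl. apply P, Hv. }
  pose proof (lb _ S0) as U.
  destruct (Glb_Rbar (Sset l theta rho)) as [g| |] eqn:E; simpl in *; try contradiction.
  exists g. split; [reflexivity|]. split.
  - intros v Hv. exact (lb v Hv).
  - intros m Hm. exact (glb (Finite m) (fun v Hv => Hm v Hv)).
Qed.

Theorem lemma6 (l : R -> R)
  (Hmono : forall x y : R, x <= y -> l x <= l y)
  (Hconv : forall (x y t : R), 0 <= t <= 1 ->
      l (t * x + (1 - t) * y) <= t * l x + (1 - t) * l y)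
  (Hnonneg : forall x : R, 0 <= l x)
  (HC1 : forall x : R, ex_derive l x /\ continuous (Derive l) x)
  (Hpos : forall z : R, - l 0 / 2 <= z -> 0 < Derive l z)
  (Hd : Rbar_lt (dpt l) (Finite (- l 0 / 2)))
  (HC2 : forall z : R, Rbar_lt (dpt l) (Finite z) ->
      ex_derive (Derive l) z /\ continuous (Derive (Derive l)) z)
  (Hsecond : forall z : R, Rbar_lt (dpt l) (Finite z) -> 0 < Derive (Derive l) z)
  (Hinvconv : forall (x y t : R), Rbar_lt (dpt l) (Finite x) -> Rbar_lt (dpt l) (Finite y) ->
      0 <= t <= 1 ->
      / Derive l (t * x + (1 - t) * y) <= t * / Derive l x + (1 - t) * / Derive l y) :
  forall theta : R, 0 <= theta <= 1 ->
  forall rho1 rho2 : R, - l 0 / 2 <= rho1 -> rho1 <= rho2 ->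
    Rbar_le (psi l theta rho1) (psi l theta rho2).
Proof.
  intros theta Hth rho1 rho2 H1 H12.
  assert (Hdd : forall x, ex_derive l x) by (intro; apply HC1).
  set (G := fun rho => real (Glb_Rbar (Sset l theta rho))).
  assert (GP : forall rho, Glb_Rbar (Sset l theta rho) = Finite (G rho) /\
    (forall v, Sset l theta rho v -> G rho <= v) /\
    (forall m, (forall v, Sset l theta rho v -> m <= v) -> m <= G rho)).
  { intro rho. destruct (glb_S l Hnonneg theta Hth rho) as [g [E P]].
    unfold G. rewrite E. simpl. split; [reflexivity|exact P]. }
  unfold psi. change (fun v => exists z : R, v = (1 + theta) / 2 * l (rho1 - z) + (1 - theta) / 2 * l (rho1 + z))
    with (Sset l theta rho1).
  change (fun v => exists z : R, v = (1 + theta) / 2 * l (rho2 - z) + (1 - theta) / 2 * l (rho2 + z))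
    with (Sset l theta rho2).
  rewrite (proj1 (GP rho1)), (proj1 (GP rho2)). simpl.
  set (F := fun rho => l rho - G rho).
  change (F rho1 <= F rho2).
  destruct (Req_dec theta 1) as [E1|N1].
  -
    assert (G rho2 <= G rho1).
    { apply (proj2 (proj2 (GP rho1))). intros v [z ->].
      apply (proj1 (proj2 (GP rho2))). exists (rho2 - rho1 + z).
      subst theta. assert (EE : rho2 - (rho2 - rho1 + z) = rho1 - z) by ring. rewrite EE. lra. }
    unfold F. pose proof (Hmono _ _ H12). lra.
  - assert (Hth' : 0 <= theta < 1) by lra.
    assert (STEP : forall x y, - l 0 / 2 <= x -> x <= y ->
              (Derive l x - Derive l y) * (y - x) <= F y - F x).
    { intros x y Hx Hxy.
      destruct (local_ineq l Hmono Hconv Hnonneg HC1 Hpos Hd Hinvconv theta Hth' x y Hxy ltac:(lra))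
        as [v' [Sv' Hv']].
      pose proof (proj1 (proj2 (GP y)) v' Sv').
      pose proof (proj2 (proj2 (GP x)) _ Hv').
      pose proof (tangent l Hconv Hdd x y).
      unfold F. lra. }
    assert (TEL : forall (del : R), 0 <= del -> forall k : nat,
       - del * (Derive l (rho1 + INR k * del) - Derive l rho1) <= F (rho1 + INR k * del) - F rho1).
    { intros del Hdel k. induction k as [|k IH].
      - simpl. replace (rho1 + 0 * del) with rho1 by ring. lra.
      - rewrite S_INR.
        pose proof (pos_INR k).
        assert (Hk : 0 <= INR k * del) by nra.
        pose proof (STEP (rho1 + INR k * del) (rho1 + (INR k + 1) * del) ltac:(lra) ltac:(nra)).
        replace (rho1 + (INR k + 1) * del - (rho1 + INR k * del)) with del in H by ring.
        nra. }
    set (K := (rho2 - rho1) * (Derive l rho2 - Derive l rho1)).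
    assert (HK : 0 <= K).
    { unfold K. pose proof (deriv_mono l Hconv Hdd rho1 rho2 H12). nra. }
    assert (BND : forall n : nat, - K / (INR n + 1) <= F rho2 - F rho1).
    { intro n. pose proof (pos_INR n).
      set (del := (rho2 - rho1) / (INR n + 1)).
      assert (Hdel : 0 <= del) by (unfold del; apply Rdiv_le_0_compat; lra).
      pose proof (TEL del Hdel (S n)) as T. rewrite S_INR in T.
      replace (rho1 + (INR n + 1) * del) with rho2 in T by (unfold del; field; lra).
      replace (- K / (INR n + 1)) with (- del * (Derive l rho2 - Derive l rho1))
        by (unfold del, K; field; lra).
      exact T. }
    destruct (Rle_or_lt (F rho1) (F rho2)) as [ok|bad]; [exact ok|exfalso].
    destruct (exists_nat_gt (K / (F rho1 - F rho2))) as [n Hn].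
    specialize (BND n). pose proof (pos_INR n).
    assert (K < (F rho1 - F rho2) * (INR n + 1)).
    { apply Rmult_lt_compat_r with (r := F rho1 - F rho2) in Hn; [|lra].
      replace (K / (F rho1 - F rho2) * (F rho1 - F rho2)) with K in Hn by (field; lra).
      nra. }
    assert (- K <= (F rho2 - F rho1) * (INR n + 1)).
    { apply Rmult_le_compat_r with (r := INR n + 1) in BND; [|lra].
      replace (- K / (INR n + 1) * (INR n + 1)) with (- K) in BND by (field; lra). exact BND. }
    nra.
Qed.
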